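(* There is a functor $U:\mathsf C(\mathcal A,\mathcal P,\mathcal X)\to\mathbf{DBoo}$ defined on objects by $U(A,Z,p)=(A,C_p,\mathbb B_p)$ and on morphisms by $U(\varphi,g,f)=\varphi$.
   Context: $\mathsf C(\mathcal A,\mathcal P,\mathcal X)$: objects are triples $(A,Z,p)$ with $A$ a complete Boolean algebra, $Z$ an open dense subset of the Stone space $\mathrm{Ult}(A)$ (basic clopen sets $\varepsilon_A(a)=\{\mathfrak u\mid a\in\mathfrak u\}$), and $p:Z\to Y$ a perfect irreducible continuous surjection onto a locally compact Hausdorff space $Y$; morphisms $(\varphi,g,f):(A,Z,p)\to(A',Z',p')$ consist of a Boolean homomorphism $\varphi:A\to A'$, the map $g:Z'\to Z$, $g(\mathfrak u')=\varphi^{-1}(\mathfrak u')$, and a map $f:Y'\to Y$ with $p\circ g=f\circ p'$; composition is componentwise. Here $a\,C_p\,b$ iff $p(\varepsilon_A(a)\cap Z)\cap p(\varepsilon_A(b)\cap Z)\ne\emptyset$, and $\mathbb B_p=\{a\in A\mid\varepsilon_A(a)\subseteq Z\}$; $(A,C_p,\mathbb B_p)$ is a complete local contact algebra (Boolean algebra with contact relation and ideal of bounded elements satisfying the standard axioms). $\mathbf{DBoo}$: objects complete local contact algebras; morphisms $\varphi:(A_1,C_1,\mathbb B_1)\to(A_2,C_2,\mathbb B_2)$ are Boolean homomorphisms reflecting contact ($\varphi(a)\,C_2\,\varphi(b)\Rightarrow a\,C_1\,b$) such that for each $b'\in\mathbb B_2$ there is $b\in\mathbb B_1$ with $b'\le\varphi(b)$;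 composition is map composition. *)

(* Defs.v *)
From HB Require Import structures.
From mathcomp Require Import all_boot all_order.
From mathcomp Require Import boolp classical_sets cardinality topology.

Set Implicit Arguments.
Unset Strict Implicit.
Unset Printing Implicit Defensive.

Import Order.TTheory.
Local Open Scope classical_set_scope.
Local Open Scope order_scope.

Section BooleanAlgebras.
Context {d : Order.disp_t} (A : ctbDistrLatticeType d).

Definition complete_BA : Prop :=
  forall S : set A, exists s : A,
    (forall x, S x -> x <= s) /\ (forall t, (forall x, S x -> x <= t) -> s <= t).

Definition ultrafilter (u : set A) : Prop :=
  [/\ u \top, ~ u \bot,
      (forall a b, u a -> a <= b -> u b),
      (forall a b, u a -> u b -> u (Order.meet a b)) &
      (forall a, u a \/ u (Order.compl a))].

Definition Ult : set (set A) := [set u | ultrafilter u].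

Definition eps (a : A) : set (set A) := [set u | ultrafilter u /\ u a].

Definition Ult_open (W : set (set A)) : Prop :=
  W `<=` Ult /\ forall u, W u -> exists a, u a /\ eps a `<=` W.

Definition Ult_dense (W : set (set A)) : Prop :=
  forall a, eps a !=set0 -> (eps a `&` W) !=set0.

Definition sub_open (Z W : set (set A)) : Prop :=
  W `<=` Z /\ forall u, W u -> exists a, u a /\ eps a `&` Z `<=` W.

Definition sub_closed (Z F : set (set A)) : Prop :=
  F `<=` Z /\ sub_open Z (Z `\` F).

Definition sub_compact (Z K : set (set A)) : Prop :=
  K `<=` Z /\
  forall (I : Type) (O : I -> set (set A)),
    (forall i, sub_open Z (O i)) -> K `<=` \bigcup_(i in [set: I]) O i ->
    exists D : set I, finite_set D /\ K `<=` \bigcup_(i in D) O i.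

Definition perfect_irreducible_surj {Y : topologicalType}
    (Z : set (set A)) (p : set A -> Y) : Prop :=
  [/\
      (forall V : set Y, open V -> sub_open Z [set u | Z u /\ V (p u)]),
      (forall y : Y, exists u, Z u /\ p u = y),
      (forall F, sub_closed Z F -> closed (p @` F)),
      (forall y : Y, sub_compact Z [set u | Z u /\ p u = y]) &
      (forall F, sub_closed Z F -> p @` F = [set: Y] -> F = Z)].

Definition bool_hom {d' : Order.disp_t} {A' : ctbDistrLatticeType d'}
    (phi : A -> A') : Prop :=
  [/\ phi \bot = \bot, phi \top = \top,
      (forall a b, phi (Order.meet a b) = Order.meet (phi a) (phi b)),
      (forall a b, phi (Order.join a b) = Order.join (phi a) (phi b)) &
      (forall a, phi (Order.compl a) = Order.compl (phi a))].

Definition contact_rel (C : A -> A -> Prop) : Prop :=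
  [/\ (forall a b, C a b -> a != \bot /\ b != \bot),
      (forall a b c, C a (Order.join b c) <-> C a b \/ C a c),
      (forall a b, C a b <-> C b a) &
      (forall a b, Order.meet a b != \bot -> C a b)].

Definition wbelow (C : A -> A -> Prop) (a b : A) : Prop := ~ C a (Order.compl b).

Definition ideal (B : set A) : Prop :=
  [/\ B \bot, (forall a b, B b -> a <= b -> B a) &
      (forall a b, B a -> B b -> B (Order.join a b))].

Definition local_contact_algebra (C : A -> A -> Prop) (B : set A) : Prop :=
  [/\ contact_rel C, ideal B,
      (forall a c, B a -> wbelow C a c ->
          exists b, B b /\ wbelow C a b /\ wbelow C b c),
      (forall a b, C a b -> exists c, B c /\ C a (Order.meet c b)) &
      (forall a, a != \bot -> exists b, B b /\ b != \bot /\ wbelow C b a)].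

Definition complete_LCA (C : A -> A -> Prop) (B : set A) : Prop :=
  complete_BA /\ local_contact_algebra C B.

End BooleanAlgebras.

Definition CAPX_obj {d : Order.disp_t} (A : ctbDistrLatticeType d)
    (Y : topologicalType) (Z : set (set A)) (p : set A -> Y) : Prop :=
  [/\ complete_BA A, Ult_open Z, Ult_dense Z &
      [/\ hausdorff_space Y, locally_compact [set: Y] &
      perfect_irreducible_surj Z p]].

Definition gmap {d d' : Order.disp_t} {A : ctbDistrLatticeType d}
    {A' : ctbDistrLatticeType d'} (phi : A -> A') (u' : set A') : set A :=
  phi @^-1` u'.

(** morphisms (phi, g, f) : (A, Z, p) -> (A', Z', p') of C(A,P,X);
    g is determined by phi and must map Z' into Z. *)
Definition CAPX_mor {d d' : Order.disp_t} {A : ctbDistrLatticeType d}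
    {A' : ctbDistrLatticeType d'} {Y Y' : topologicalType}
    (Z : set (set A)) (p : set A -> Y) (Z' : set (set A')) (p' : set A' -> Y')
    (phi : A -> A') (f : Y' -> Y) : Prop :=
  [/\ bool_hom phi,
      (forall u', Z' u' -> Z (gmap phi u')) &
      (forall u', Z' u' -> p (gmap phi u') = f (p' u'))].

Definition Cp {d : Order.disp_t} {A : ctbDistrLatticeType d} {Y : topologicalType}
    (Z : set (set A)) (p : set A -> Y) (a b : A) : Prop :=
  (p @` (eps a `&` Z)) `&` (p @` (eps b `&` Z)) !=set0.

Definition Bp {d : Order.disp_t} {A : ctbDistrLatticeType d}
    (Z : set (set A)) : set A := [set a | eps a `<=` Z].

Definition DBoo_mor {d d' : Order.disp_t} {A : ctbDistrLatticeType d}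
    {A' : ctbDistrLatticeType d'}
    (C : A -> A -> Prop) (B : set A) (C' : A' -> A' -> Prop) (B' : set A')
    (phi : A -> A') : Prop :=
  [/\ bool_hom phi,
      (forall a b, C' (phi a) (phi b) -> C a b) &
      (forall b', B' b' -> exists b, B b /\ b' <= phi b)].

Definition Umor {d d' : Order.disp_t} {A : ctbDistrLatticeType d}
    {A' : ctbDistrLatticeType d'} {Y Y' : topologicalType}
    (phi : A -> A') (g : set A' -> set A) (f : Y' -> Y) : A -> A' := phi.

(* Main.v *)
Require Import Defs.
From HB Require Import structures.
From mathcomp Require Import all_boot all_order.
From mathcomp Require Import boolp classical_sets cardinality topology.
Set Implicit Arguments.
Unset Strict Implicit.
Unset Printing Implicit Defensive.
Import Order.Theory.
Local Open Scope classical_set_scope.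
Local Open Scope order_scope.

Section UF.
Context {d : Order.disp_t} (A : ctbDistrLatticeType d).
Implicit Types (u : set A) (x y : A).

Lemma uf_up u x y : ultrafilter u -> u x -> x <= y -> u y.
Proof. by case=> _ _ H _ _; apply: H. Qed.
Lemma uf_meet u x y : ultrafilter u -> u x -> u y -> u (Order.meet x y).
Proof. by case=> _ _ _ H _; apply: H. Qed.
Lemma uf_meetE u x y : ultrafilter u -> u (Order.meet x y) -> u x /\ u y.
Proof. by move=> U h; split; [exact: (uf_up U h (leIl _ _)) | exact: (uf_up U h (leIr _ _))]. Qed.
Lemma uf_bot u : ultrafilter u -> ~ u \bot.
Proof. by case. Qed.
Lemma uf_notC u x : ultrafilter u -> u x -> ~ u (Order.compl x).
Proof. by move=> U h1 h2; apply: (uf_bot U); rewrite -(meetxC x); apply: uf_meet. Qed.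
Lemma uf_C u x : ultrafilter u -> ~ u x -> u (Order.compl x).
Proof. by case=> _ _ _ _ H /[dup] nx; case: (H x). Qed.
Lemma uf_join u x y : ultrafilter u -> u (Order.join x y) -> u x \/ u y.
Proof.
move=> U h; apply: contrapT => /not_orP [nx ny].
have := uf_meet U (uf_C U nx) (uf_C U ny); rewrite -complU.
exact: uf_notC.
Qed.
Lemma uf_joinl u x y : ultrafilter u -> u x -> u (Order.join x y).
Proof. by move=> U h; exact: (uf_up U h (leUl _ _)). Qed.
Lemma uf_joinr u x y : ultrafilter u -> u y -> u (Order.join x y).
Proof. by move=> U h; exact: (uf_up U h (leUr _ _)). Qed.

Lemma eps_sub x y : x <= y -> eps x `<=` eps y.
Proof. by move=> le u [U h]; split => //; exact: (uf_up U h le). Qed.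

Definition jn (s : seq A) : A := foldr Order.join \bot s.

Lemma uf_jn u s : ultrafilter u -> u (jn s) -> exists2 x, x \in s & u x.
Proof.
move=> U; elim: s => [|x s IH] /=; first by move/(uf_bot U).
case/(uf_join U) => [h|/IH [y ys hy]]; first by exists x; rewrite ?inE ?eqxx.
by exists y; rewrite // inE ys orbT.
Qed.

Lemma le_meetC_bot x y : Order.meet x (Order.compl y) <= \bot -> x <= y.
Proof.
move=> h; have -> : x = Order.meet x (Order.join y (Order.compl y)) by rewrite joinxC meetx1.
rewrite meetUr; rewrite leUx leIr /=.
by apply: le_trans h _; rewrite le0x.
Qed.

Definition pfilter (F : set A) : Prop :=
  [/\ F \top, ~ F \bot, (forall x y, F x -> x <= y -> F y) &
      (forall x y, F x -> F y -> F (Order.meet x y))].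

Lemma uf_ext F : pfilter F -> exists u, ultrafilter u /\ F `<=` u.
Proof.
move=> PF; pose P (X : set A) := X = set0 \/ (pfilter X /\ F `<=` X).
have chain : forall G : set (set A), G `<=` P -> total_on G subset ->
    P (\bigcup_(X in G) X).
  move=> G GP tot.
  have [[X0 GX0 X0n]|none] := pselect (exists2 X, G X & X <> set0); last first.
    left; apply/seteqP; split => // y [X GX Xy]; apply: none; exists X => //.
    by move=> X0; rewrite X0 in Xy.
  have [//|[[t0 nb0 up0 me0] FX0]] := GP _ GX0.
  have filt : forall X, G X -> X <> set0 -> pfilter X.
    by move=> X GX Xn; case: (GP _ GX) => // -[].
  right; split; last by move=> y Fy; exists X0 => //; exact: FX0.
  split.
  - by exists X0.
  - move=> [X GX Xb]; have Xn : X <> set0 by move=> E; rewrite E in Xb.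
    by case: (filt _ GX Xn) => _ + _ _; apply.
  - move=> x y [X GX Xx] le; have Xn : X <> set0 by move=> E; rewrite E in Xx.
    by exists X => //; case: (filt _ GX Xn) => _ _ up _; exact: (up _ _ Xx le).
  - move=> x y [X GX Xx] [Y GY Yy].
    have Xn : X <> set0 by move=> E; rewrite E in Xx.
    have Yn : Y <> set0 by move=> E; rewrite E in Yy.
    case: (tot _ _ GX GY) => sub.
    + exists Y => //; case: (filt _ GY Yn) => _ _ _ me; apply: me => //; exact: sub.
    + exists X => //; case: (filt _ GX Xn) => _ _ _ me; apply: me => //; exact: sub.
have [M [PM maxM]] := Zorn_bigcup chain.
case: PM => [M0|[[Mt Mb Mup Mme] FM]].
  exfalso; apply: (maxM F _ (or_intror (conj PF (@subset_refl _ F)))).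
  rewrite M0; split => //; case: PF => Ft _ _ _ /(_ _ Ft).
  by [].
exists M; split => //; split => // x.
have [Mx|nMx] := pselect (M x); first by left.
right.
pose B := [set y | exists2 a, M a & Order.meet a x <= y].
have MB : M `<=` B.
  by move=> a Ma; exists a => //; rewrite leIl.
have prop : M `<` B.
  split => // /(_ x) h; apply: nMx; apply: h; exists Order.top => //.
  by rewrite leIr.
have Bb : B \bot.
  apply: contrapT => nBb; apply: (maxM B prop); right; split; last first.
    by move=> y /FM /MB.
  split.
  - by apply: MB.
  - by [].
  - by move=> y z [a Ma le] le2; exists a => //; exact: le_trans le2.
  - move=> y z [a Ma le] [b Mb2 le2]; exists (Order.meet a b); first exact: Mme.
    rewrite lexI; apply/andP; split.
      by apply: le_trans le; rewrite leI2 // leIl.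
    by apply: le_trans le2; rewrite leI2 // leIr.
case: Bb => a Ma le; apply: (Mup a) => //.
by apply: le_meetC_bot; rewrite complK.
Qed.

Lemma uf_E1 x : x != \bot -> exists u, ultrafilter u /\ u x.
Proof.
move=> xn; have [|u [U Fu]] := @uf_ext [set y | x <= y].
  split => //=.
  - by apply/negP; rewrite lex0.
  - by move=> y z h1 h2; apply: le_trans h2.
  - by move=> y z h1 h2; rewrite lexI h1 h2.
by exists u; split => //; apply: Fu => /=.
Qed.

Lemma jn_cat s t : jn (s ++ t) = Order.join (jn s) (jn t).
Proof. by elim: s => [|x s IH] /=; rewrite ?join0x // IH joinA. Qed.

Lemma uf_E2 (S : set A) a :
  (exists s, (forall y, y \in s -> S y) /\ a <= jn s) \/
  (exists u, ultrafilter u /\ u a /\ forall y, S y -> ~ u y).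
Proof.
have [//|no] := pselect (exists s, (forall y, y \in s -> S y) /\ a <= jn s); first by left.
right.
pose F := [set y | exists2 s, (forall y, y \in s -> S y) &
                    Order.meet a (Order.compl (jn s)) <= y].
have [|u [U Fu]] := @uf_ext F.
  split.
  - by exists [::] => //; exact: lex1.
  - move=> [s sS le]; apply: no; exists s; split => //.
    by apply: le_meetC_bot.
  - by move=> y z [s sS le] le2; exists s => //; apply: le_trans le2.
  - move=> y z [s sS le] [t tS le2]; exists (s ++ t).
      by move=> w; rewrite mem_cat => /orP[/sS|/tS].
    rewrite jn_cat complU lexI; apply/andP; split.
      by apply: le_trans le; rewrite leI2 // leIl.
    by apply: le_trans le2; rewrite leI2 // leIr.
exists u; split => //; split.
  by apply: Fu; exists [::] => //=; rewrite leIl.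
move=> y Sy uy; apply: (uf_notC U uy); apply: Fu; exists [:: y].
  by move=> w; rewrite inE => /eqP ->.
by rewrite /= joinx0 leIr.
Qed.
End UF.


Lemma eps0_sub {d} {A : ctbDistrLatticeType d} (Z : set (set A)) : eps \bot `<=` Z.
Proof. by move=> u [U h]; case: (uf_bot U h). Qed.

Lemma epsU_sub {d} {A : ctbDistrLatticeType d} (Z : set (set A)) x y :
  eps x `<=` Z -> eps y `<=` Z -> eps (Order.join x y) `<=` Z.
Proof.
by move=> hx hy u [U h]; case: (uf_join U h) => h'; [apply: hx|apply: hy].
Qed.

Lemma part2 (d d' : Order.disp_t) (A : ctbDistrLatticeType d)
          (A' : ctbDistrLatticeType d') (Y Y' : topologicalType)
          (Z : set (set A)) (p : set A -> Y)
          (Z' : set (set A')) (p' : set A' -> Y') (phi : A -> A') (f : Y' -> Y) :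
      CAPX_obj Z p -> CAPX_obj Z' p' -> CAPX_mor Z p Z' p' phi f ->
      DBoo_mor (Cp Z p) (Bp Z) (Cp Z' p') (Bp Z') phi.
Proof.
move=> [_ [ZU Zop] _ _] [_ [ZU' Zop'] _ _] [hom gZ pg].
split => //.
- move=> a b; rewrite /Cp; case=> y [[u' [[U' ua] Zu'] <-] [v' [[V' vb] Zv'] e]].
  exists (p (gmap phi u')); split.
    exists (gmap phi u') => //; hnf; split; [hnf; split => //; exact: (ZU _ (gZ _ Zu')) | exact: gZ].
  exists (gmap phi v'); last by rewrite !pg // e.
  hnf; split; [hnf; split => //; exact: (ZU _ (gZ _ Zv')) | exact: gZ].
- move=> b' Bb'.
  have [[s [sS le]]|[u' [U' [ub nS]]]] :=
    uf_E2 [set x | exists e, eps e `<=` Z /\ x = phi e] b'; last first.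
    have Zu' : Z' u' by apply: Bb'; split.
    have [e [ge eZ]] := Zop _ (gZ _ Zu').
    by exfalso; apply: (nS (phi e)) => //; exists e.
  suff [b [bZ jb]] : exists b, eps b `<=` Z /\ jn s <= phi b.
    by exists b; split => //; apply: le_trans jb.
  elim: s sS {le} => [|x s IH] sS.
    by exists \bot; split; [exact: eps0_sub|exact: le0x].
  have [|b [bZ jb]] := IH; first by move=> y ys; apply: sS; rewrite inE ys orbT.
  have [e [eZ ->]] : exists e, eps e `<=` Z /\ x = phi e by apply: sS; rewrite inE eqxx.
  exists (Order.join b e); split; first exact: epsU_sub.
  case: hom => _ _ _ hj _; rewrite hj /= joinC; exact: leU2.
Qed.


Section P1.
Context {d : Order.disp_t} {A : ctbDistrLatticeType d} {Y : topologicalType}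
  (Z : set (set A)) (p : set A -> Y).
Hypothesis ZU : Z `<=` @Ult _ A.
Hypothesis Zop : forall u, Z u -> exists a, u a /\ eps a `<=` Z.
Hypothesis Zd : Ult_dense Z.
Hypothesis cont : forall V : set Y, open V -> sub_open Z [set u | Z u /\ V (p u)].
Hypothesis surj : forall y, exists u, Z u /\ p u = y.
Hypothesis clm : forall F, sub_closed Z F -> closed (p @` F).
Hypothesis fib : forall y, sub_compact Z [set u | Z u /\ p u = y].
Hypothesis irr : forall F, sub_closed Z F -> p @` F = [set: Y] -> F = Z.

Lemma cont_basic V u : open V -> Z u -> V (p u) ->
  exists e, u e /\ eps e `<=` Z /\ (forall v, eps e v -> V (p v)).
Proof.
move=> oV Zu Vu; have [_ hop] := cont oV.
have [e1 [ue1 h1]] := hop u (conj Zu Vu).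
have [e2 [ue2 h2]] := Zop Zu.
have U := ZU Zu.
exists (Order.meet e1 e2); split; first exact: uf_meet.
have s2 : eps (Order.meet e1 e2) `<=` Z.
  by apply: subset_trans h2; apply: eps_sub; rewrite leIr.
split => // v ev; have [] := h1 v; last by [].
by split; [apply: (eps_sub (leIl e1 e2))|apply: s2].
Qed.

Lemma closedD b : sub_closed Z (Z `\` eps b).
Proof.
split; first by move=> u [].
split; first by move=> u [].
move=> u [Zu nu]; have U := ZU Zu.
have ub : u b.
  by apply: contrapT => nb; apply: nu; split => // -[_ ].
exists b; split => // v [[V vb] Zv]; split => // -[_]; apply; by split.
Qed.

Lemma open_img b : open (~` (p @` (Z `\` eps b))).
Proof. exact: closed_openC (clm (closedD b)). Qed.


Lemma contact_ok : contact_rel (Cp Z p).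
Proof.
split.
- move=> a b; rewrite /Cp; case=> y [[u [[U ua] _] _] [v [[V vb] _] _]].
  split; apply/eqP => e; [rewrite e in ua; exact: (uf_bot U ua)
                         |rewrite e in vb; exact: (uf_bot V vb)].
- move=> a b c; rewrite /Cp; split.
    case=> y [ha [v [[V vbc] Zv] e]].
    case: (uf_join V vbc) => h; [left|right]; exists y; split => //;
      by exists v.
  case=> -[y [ha [v [[V vb] Zv] e]]]; exists y; split => //; exists v => //;
    split => //; split => //; [exact: uf_joinl|exact: uf_joinr].
- by move=> a b; rewrite /Cp; split; case=> y [h1 h2]; exists y.
- move=> a b nab.
  have [u [U uab]] := uf_E1 nab.
  have [v [[V vab] Zv]] := Zd (ex_intro _ u (conj U uab)).
  have [va vb] := uf_meetE V vab.
  by rewrite /Cp; exists (p v); split; exists v.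
Qed.

Lemma ideal_ok : ideal (Bp Z).
Proof.
split.
- exact: eps0_sub.
- by move=> a b hb le; apply: subset_trans hb; apply: eps_sub.
- by move=> a b ha hb; apply: epsU_sub.
Qed.

Lemma BC2_ok a b : Cp Z p a b -> exists c, Bp Z c /\ Cp Z p a (Order.meet c b).
Proof.
rewrite /Cp; case=> y [ha [v [[V vb] Zv] e]].
have [c [vc cZ]] := Zop Zv.
exists c; split => //; exists y; split => //; exists v => //.
by split => //; split => //; apply: uf_meet.
Qed.

Lemma BC3_ok a : a != \bot -> exists b, Bp Z b /\ b != \bot /\ wbelow (Cp Z p) b a.
Proof.
move=> an.
have [u [U ua]] := uf_E1 an.
have [w [[W wa] Zw]] := Zd (ex_intro _ u (conj U ua)).
have [y ny] : exists y, ~ (p @` (Z `\` eps a)) y.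
  apply: contrapT => h.
  have E : p @` (Z `\` eps a) = [set: Y].
    by apply/seteqP; split => // y _; apply: contrapT => ny; apply: h; exists y.
  have := irr (closedD a) E => E2.
  move: Zw; rewrite -E2 => -[_]; apply; by split.
have [v [Zv pv]] := surj y.
have [e [ve [eZ eV]]] := cont_basic (open_img a) Zv (ltac:(by rewrite pv)).
exists e; split => //; split.
  by apply/eqP => e0; rewrite e0 in ve; exact: (uf_bot (ZU Zv) ve).
rewrite /wbelow /Cp; case=> y' [[x [xe Zx] <-] [z [[Z' zna] Zz] ez]].
apply: (eV x xe); exists z => //; split => // -[_ za].
exact: (uf_notC Z' za zna).
Qed.


Lemma Wmono x y q : eps x `<=` eps y ->
  ~ (p @` (Z `\` eps x)) q -> ~ (p @` (Z `\` eps y)) q.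
Proof.
move=> sxy h [z [Zz nz] e]; apply: h; exists z => //; split => // /sxy; exact: nz.
Qed.

Lemma BC1_ok a c : Bp Z a -> wbelow (Cp Z p) a c ->
  exists b, Bp Z b /\ wbelow (Cp Z p) a b /\ wbelow (Cp Z p) b c.
Proof.
rewrite /Bp /wbelow /Cp /= => aZ nC.
pose F := p @` (Z `\` eps c).
have Kdisj : forall w, eps a w -> ~ F (p w).
  move=> w wa [z [Zz nz] e]; apply: nC; exists (p w); split.
    by exists w => //; split => //; apply: aZ.
  exists z => //; split => //; split; first exact: ZU.
  by apply: uf_C; [exact: ZU|move=> zc; apply: nz; split => //; exact: ZU].
pose S e := eps e `<=` Z /\ forall v, eps e v -> ~ F (p v).
have S0 : S \bot.
  by split; [exact: eps0_sub|move=> v [V vb]; case: (uf_bot V vb)].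
have SU : forall x y, S x -> S y -> S (Order.join x y).
  move=> x y [xZ xF] [yZ yF]; split; first exact: epsU_sub.
  move=> v [V vxy]; case: (uf_join V vxy) => h; [apply: xF|apply: yF]; by split.
have step1 : forall w, eps a w -> exists b, S b /\
    (forall v, Z v -> p v = p w -> eps b v).
  move=> w wa.
  have [_ cover] := fib (p w).
  pose O (e : A) := [set v | S e /\ eps e v].
  have [| |D [finD DO]] := cover A O.
  - move=> e; split; first by move=> v [[eZ _] ev]; apply: eZ.
    move=> v [Se ev]; exists e; split; first by case: ev.
    by move=> x [xe _].
  - move=> v [Zv pv].
    have nF : ~ F (p v) by rewrite pv; apply: Kdisj.
    have [e [ve [eZ eV]]] := cont_basic (open_img c) Zv nF.
    exists e => //; split; last by split => //; exact: ZU.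
    by split.
  have [X DX] := (finite_fsetP.1 finD).
  have [b [Sb hb]] : exists b, S b /\ forall e v, e \in (finmap.enum_fset X) -> O e v -> eps b v.
    elim: (finmap.enum_fset X) => [|e s [b [Sb hb]]].
      by exists \bot; split => // e v.
    have [Se|nSe] := pselect (S e).
      exists (Order.join b e); split; first exact: SU.
      move=> e' v; rewrite inE => /orP[/eqP -> [_ [V ve]]|es Ov].
        by split => //; apply: uf_joinr.
      have [V vb] := hb _ _ es Ov; split => //; exact: uf_joinl.
    exists b; split => // e' v; rewrite inE => /orP[/eqP -> [] //|es Ov].
    exact: hb es Ov.
  exists b; split => // v Zv pv.
  have [e De Oev] := DO v (conj Zv pv).
  apply: (hb e) => //; move: De; rewrite DX /=.
  by [].
pose S2 c' := exists b, S b /\ forall u, eps c' u -> Z u ->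
                ~ (p @` (Z `\` eps b)) (p u).
have [[s [sS le]]|[w [W [wa nS]]]] := uf_E2 S2 a; last first.
  have Zw : Z w by apply: aZ.
  have [b [Sb fb]] := step1 w (conj W wa).
  have Wb : ~ (p @` (Z `\` eps b)) (p w).
    by move=> [z [Zz nz] e]; apply: nz; apply: fb.
  have [c' [wc' [c'Z c'V]]] := cont_basic (open_img b) Zw Wb.
  by exfalso; apply: (nS c') => //; exists b; split => // u /c'V.
have [b [Sb hb]] : exists b, S b /\ forall c', c' \in s -> forall u,
    eps c' u -> Z u -> ~ (p @` (Z `\` eps b)) (p u).
  elim: s sS {le} => [|c' s IH] sS.
    by exists \bot; split.
  have [|b [Sb hb]] := IH; first by move=> y ys; apply: sS; rewrite inE ys orbT.
  have [b' [Sb' hb']] : S2 c' by apply: sS; rewrite inE eqxx.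
  exists (Order.join b b'); split; first exact: SU.
  move=> c'' ; rewrite inE => /orP[/eqP -> u uc Zu|cs u uc Zu].
    exact: (Wmono (eps_sub (leUr b' b)) (hb' u uc Zu)).
  exact: (Wmono (eps_sub (leUl b b')) (hb _ cs u uc Zu)).
exists b; split; first by case: Sb.
split.
  case=> y [[w [[W wa] Zw] <-] [z [[Z' znb] Zz] e]].
  have [c' cs wc'] := uf_jn W (uf_up W wa le).
  apply: (hb c' cs w (conj W wc') Zw); exists z => //; split => // -[_ zb].
  exact: (uf_notC Z' zb znb).
case=> y [[v [vb Zv] <-] [z [[Z' znc] Zz] e]].
case: Sb => _ /(_ v vb); apply; exists z => //; split => // -[_ zc].
exact: (uf_notC Z' zc znc).
Qed.

End P1.


Lemma part1 (d : Order.disp_t) (A : ctbDistrLatticeType d) (Y : topologicalType)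
          (Z : set (set A)) (p : set A -> Y) :
      CAPX_obj Z p -> complete_LCA (Cp Z p) (Bp Z).
Proof.
move=> [cA [ZU Zop] Zd [_ _ [cont surj clm fib irr]]].
split => //; split.
- exact: contact_ok.
- exact: ideal_ok.
- by move=> a c; apply: BC1_ok.
- by move=> a b; apply: BC2_ok.
- by move=> a; apply: BC3_ok.
Qed.

Theorem proposition3p13 :
  (* U is well defined on objects: (A, C_p, B_p) is an object of DBoo *)
  (forall (d : Order.disp_t) (A : ctbDistrLatticeType d) (Y : topologicalType)
          (Z : set (set A)) (p : set A -> Y),
      CAPX_obj Z p -> complete_LCA (Cp Z p) (Bp Z)) /\
  (* U is well defined on morphisms: phi is a DBoo-morphism *)
  (forall (d d' : Order.disp_t) (A : ctbDistrLatticeType d)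
          (A' : ctbDistrLatticeType d') (Y Y' : topologicalType)
          (Z : set (set A)) (p : set A -> Y)
          (Z' : set (set A')) (p' : set A' -> Y') (phi : A -> A') (f : Y' -> Y),
      CAPX_obj Z p -> CAPX_obj Z' p' -> CAPX_mor Z p Z' p' phi f ->
      DBoo_mor (Cp Z p) (Bp Z) (Cp Z' p') (Bp Z') (Umor phi (gmap phi) f)) /\
  (* U preserves identities *)
  (forall (d : Order.disp_t) (A : ctbDistrLatticeType d) (Y : topologicalType),
      Umor (@id A) (@id (set A)) (@id Y) = id) /\
  (* U preserves composition (componentwise composition in C(A,P,X)) *)
  (forall (d d' d'' : Order.disp_t) (A : ctbDistrLatticeType d)
          (A' : ctbDistrLatticeType d') (A'' : ctbDistrLatticeType d'')
          (Y Y' Y'' : topologicalType)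
          (phi : A -> A') (g : set A' -> set A) (f : Y' -> Y)
          (psi : A' -> A'') (h : set A'' -> set A') (k : Y'' -> Y'),
      Umor (psi \o phi) (g \o h) (f \o k) = Umor psi h k \o Umor phi g f).
Proof.
split; first exact: part1.
split; first by move=> d d' A A' Y Y' Z p Z' p' phi f h1 h2 h3; exact: (part2 h1 h2 h3).
by split => *.
Qed.
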